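(* Let $N\ge 2$, $\lambda$ a parameter, and for $x,p\in\mathbb{C}^N$ set $$L_k(x,p;\lambda)=\begin{pmatrix}\lambda+e^{p_k} & e^{x_k}\\ \lambda e^{-x_k} & 1\end{pmatrix},\qquad T_N(x,p;\lambda)=L_N(x,p;\lambda)\cdots L_1(x,p;\lambda).$$ (a) Periodic case: if $\widetilde{x}\in\mathbb{C}^N$ satisfies $e^{p_k}=\big(e^{\widetilde{x}_k-x_k}-1\big)\big(\lambda+e^{x_k-\widetilde{x}_{k-1}}\big)$ for $k=1,\dots,N$ with $\widetilde x_0=\widetilde x_N$, $x_{N+1}=x_1$, then $P(x,\widetilde{x})=\prod_{k=1}^N\big(1+\lambda e^{\widetilde{x}_k-x_{k+1}}\big)$ is an eigenvalue of $T_N(x,p;\lambda)$. (b) Open-end case: if $\widetilde{x}\in\mathbb{C}^N$ satisfies $e^{p_1}=\lambda\big(e^{\widetilde{x}_1-x_1}-1\big)$ and $e^{p_k}=\big(e^{\widetilde{x}_k-x_k}-1\big)\big(\lambda+e^{x_k-\widetilde{x}_{k-1}}\big)$ for $k=2,\dots,N$, then the $(1,1)$-entry of $T_N(x,p;\lambda)$ equals $\lambda P(x,\widetilde{x})$, where $P(x,\widetilde{x})=e^{\widetilde{x}_N-x_1}\prod_{k=1}^{N-1}\big(1+\lambda e^{\widetilde{x}_k-x_{k+1}}\big)$.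
   Context: The relation between $(x,p)$ and $\widetilde x$ is the first half of the Bäcklund transformation $F_\lambda$ of the modified Toda lattice $\ddot x_k=\dot x_k(e^{x_{k+1}-x_k}-e^{x_k-x_{k-1}})$, with periodic resp. open-end ($x_0=+\infty$, $x_{N+1}=-\infty$) boundary conditions. *)

(* Defs.v *)
From Stdlib Require Import Reals.
From Coquelicot Require Import Coquelicot.
Open Scope C_scope.

Definition Cexp (z : C) : C :=
  (exp (Re z) * cos (Im z), exp (Re z) * sin (Im z))%R.

Record M2 := mkM2 { m11 : C; m12 : C; m21 : C; m22 : C }.

Definition M2mul (A B : M2) : M2 :=
  mkM2 (m11 A * m11 B + m12 A * m21 B) (m11 A * m12 B + m12 A * m22 B)
       (m21 A * m11 B + m22 A * m21 B) (m21 A * m12 B + m22 A * m22 B).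

Definition M2id : M2 := mkM2 1 0 0 1.

(* Lax matrix L_k(x,p;lambda); sequences are indexed 1..N *)
Definition Lax (x p : nat -> C) (lam : C) (k : nat) : M2 :=
  mkM2 (lam + Cexp (p k)) (Cexp (x k)) (lam * Cexp (- x k)) 1.

Fixpoint monodromy (x p : nat -> C) (lam : C) (n : nat) : M2 :=
  match n with
  | O => M2id
  | S m => M2mul (Lax x p lam (S m)) (monodromy x p lam m)
  end.

Definition is_eigenvalue (A : M2) (mu : C) : Prop :=
  exists v1 v2 : C, (v1 <> 0 \/ v2 <> 0) /\
    m11 A * v1 + m12 A * v2 = mu * v1 /\
    m21 A * v1 + m22 A * v2 = mu * v2.

Fixpoint Cprod1 (n : nat) (f : nat -> C) : C :=
  match n with
  | O => 1
  | S m => Cprod1 m f * f (S m)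
  end.

(* Main.v *)
Require Import Defs.
From Stdlib Require Import Reals Lia.
From Coquelicot Require Import Coquelicot.
Open Scope C_scope.

Lemma Cexp_add (a b : C) : Cexp (a + b) = Cexp a * Cexp b.
Proof.
  destruct a as [a1 a2], b as [b1 b2]. unfold Cexp; simpl.
  rewrite exp_plus, cos_plus, sin_plus.
  apply injective_projections; simpl; ring.
Qed.

Lemma Cexp_0 : Cexp 0 = 1.
Proof.
  unfold Cexp; simpl. rewrite exp_0, cos_0, sin_0.
  apply injective_projections; simpl; ring.
Qed.

Lemma Cexp_inv (a : C) : Cexp (- a) * Cexp a = 1.
Proof.
  rewrite <- Cexp_add. replace (- a + a) with (0 : C) by ring. apply Cexp_0.
Qed.

Lemma Cexp_nz (a : C) : Cexp a <> 0.
Proof.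
  intro H. pose proof (Cexp_inv a) as E. rewrite H, Cmult_0_r in E.
  apply C1_nz. auto.
Qed.

Lemma Cexp_neg (a : C) : Cexp (- a) = / Cexp a.
Proof.
  pose proof (Cexp_inv a). pose proof (Cexp_nz a).
  transitivity (Cexp (- a) * Cexp a * / Cexp a); [field; auto|].
  rewrite H. ring.
Qed.

Lemma Cexp_sub (a b : C) : Cexp (a - b) = Cexp a / Cexp b.
Proof.
  unfold Cminus. rewrite Cexp_add, Cexp_neg. reflexivity.
Qed.

Lemma chain (x p : nat -> C) (lam : C) (n : nat) (v w c : nat -> C) :
  (forall k, (k < n)%nat ->
     m11 (Lax x p lam (S k)) * v k + m12 (Lax x p lam (S k)) * w k = c (S k) * v (S k) /\
     m21 (Lax x p lam (S k)) * v k + m22 (Lax x p lam (S k)) * w k = c (S k) * w (S k)) ->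
  m11 (monodromy x p lam n) * v 0%nat + m12 (monodromy x p lam n) * w 0%nat
     = Cprod1 n c * v n /\
  m21 (monodromy x p lam n) * v 0%nat + m22 (monodromy x p lam n) * w 0%nat
     = Cprod1 n c * w n.
Proof.
  induction n as [|m IH]; intros H.
  - simpl. split; ring.
  - destruct IH as [I1 I2]. { intros k Hk. apply H. lia. }
    destruct (H m ltac:(lia)) as [H1 H2].
    cbn [monodromy Cprod1 M2mul m11 m12 m21 m22].
    set (L := Lax x p lam (S m)) in *.
    set (M := monodromy x p lam m) in *.
    split.
    + transitivity (m11 L * (m11 M * v 0%nat + m12 M * w 0%nat)
                    + m12 L * (m21 M * v 0%nat + m22 M * w 0%nat)); [ring|].
      rewrite I1, I2.
      transitivity (Cprod1 m c * (m11 L * v m + m12 L * w m)); [ring|].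
      rewrite H1. ring.
    + transitivity (m21 L * (m11 M * v 0%nat + m12 M * w 0%nat)
                    + m22 L * (m21 M * v 0%nat + m22 M * w 0%nat)); [ring|].
      rewrite I1, I2.
      transitivity (Cprod1 m c * (m21 L * v m + m22 L * w m)); [ring|].
      rewrite H2. ring.
Qed.

Lemma Cprod1_shift (m : nat) (c : nat -> C) :
  Cprod1 (S m) c = c 1%nat * Cprod1 m (fun k => c (S k)).
Proof.
  induction m as [|m IH].
  - simpl. ring.
  - change (Cprod1 (S (S m)) c) with (Cprod1 (S m) c * c (S (S m))).
    rewrite IH. simpl. ring.
Qed.

Lemma Cprod1_ext (m : nat) (f g : nat -> C) :
  (forall k, (1 <= k <= m)%nat -> f k = g k) -> Cprod1 m f = Cprod1 m g.
Proof.
  induction m as [|m IH]; intros H; simpl; auto.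
  rewrite IH, H; [reflexivity| lia |]. intros; apply H; lia.
Qed.

Lemma step (x p xt : nat -> C) (lam : C) (k : nat) (Yp : C) :
  Cexp (p k) = (Cexp (xt k - x k) - 1) * (lam + Cexp (x k) / Yp) -> Yp <> 0 ->
  m11 (Lax x p lam k) * Yp + m12 (Lax x p lam k) * 1
     = (1 + lam * Yp / Cexp (x k)) * Cexp (xt k) /\
  m21 (Lax x p lam k) * Yp + m22 (Lax x p lam k) * 1
     = (1 + lam * Yp / Cexp (x k)) * 1.
Proof.
  intros HE HY. pose proof (Cexp_nz (x k)).
  unfold Lax; cbn [m11 m12 m21 m22]. rewrite HE, Cexp_sub, Cexp_neg.
  split; field; auto.
Qed.

Theorem theorem9 (N : nat) (HN : (2 <= N)%nat) (lam : C) (x p xt : nat -> C) :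
  (* (a) periodic case: xt_0 = xt_N, x_{N+1} = x_1 *)
  ((forall k : nat, (1 <= k <= N)%nat ->
      Cexp (p k) = (Cexp (xt k - x k) - 1) *
        (lam + Cexp (x k - (if Nat.eqb k 1 then xt N else xt (k - 1)%nat)))) ->
   is_eigenvalue (monodromy x p lam N)
     (Cprod1 N (fun k => 1 + lam * Cexp (xt k -
        (if Nat.eqb k N then x 1%nat else x (k + 1)%nat)))))
  /\
  (* (b) open-end case *)
  ((Cexp (p 1%nat) = lam * (Cexp (xt 1%nat - x 1%nat) - 1) /\
    forall k : nat, (2 <= k <= N)%nat ->
      Cexp (p k) = (Cexp (xt k - x k) - 1) *
        (lam + Cexp (x k - xt (k - 1)%nat))) ->
   m11 (monodromy x p lam N) =
     lam * (Cexp (xt N - x 1%nat) *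
            Cprod1 (N - 1) (fun k => 1 + lam * Cexp (xt k - x (k + 1)%nat)))).
Proof.
  destruct N as [|M]; [lia|].
  replace (S M - 1)%nat with M by lia.
  set (d := fun k => 1 + lam * Cexp (xt k - x (k + 1)%nat)).
  split.
  - intros H.
    set (v := fun k => match k with O => Cexp (xt (S M)) | S j => Cexp (xt (S j)) end).
    set (c := fun k => 1 + lam * v (k - 1)%nat / Cexp (x k)).
    destruct (chain x p lam (S M) v (fun _ => 1) c) as [E1 E2].
    { intros k Hk. specialize (H (S k) ltac:(lia)).
      assert (Hv : v k = Cexp (if Nat.eqb (S k) 1 then xt (S M) else xt (S k - 1)%nat)).
      { destruct k; reflexivity. }
      rewrite (Cexp_sub (x (S k))), <- Hv in H.
      replace (c (S k)) with (1 + lam * v k / Cexp (x (S k))).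
      2:{ unfold c. simpl. rewrite Nat.sub_0_r. auto. }
      apply step; auto; try (rewrite Hv; apply Cexp_nz). }
    exists (v (S M)), 1. split.
    { right. apply C1_nz. }
    assert (Hc : Cprod1 (S M) c = Cprod1 (S M) (fun k => 1 + lam * Cexp (xt k -
        (if Nat.eqb k (S M) then x 1%nat else x (k + 1)%nat)))).
    2:{ change (v (S M)) with (v 0%nat) at 1 3. rewrite E1, E2, Hc. split; ring. }
    rewrite (Cprod1_shift M c).
    change (Cprod1 (S M) _) with
      (Cprod1 M (fun k => 1 + lam * Cexp (xt k - (if Nat.eqb k (S M) then x 1%nat else x (k + 1)%nat)))
       * (1 + lam * Cexp (xt (S M) - (if Nat.eqb (S M) (S M) then x 1%nat else x (S M + 1)%nat)))).
    rewrite Nat.eqb_refl.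
    rewrite (Cprod1_ext M (fun k => c (S k)) d).
    2:{ intros k Hk. unfold c, d, v. simpl. rewrite Nat.sub_0_r.
        destruct k as [|j]; [lia|]. rewrite Cexp_sub.
        replace (S j + 1)%nat with (S (S j)) by lia. unfold Cdiv; ring. }
    rewrite (Cprod1_ext M (fun k => 1 + lam * Cexp (xt k - (if Nat.eqb k (S M) then x 1%nat else x (k + 1)%nat))) d).
    2:{ intros k Hk. destruct (Nat.eqb_spec k (S M)); [lia|]. reflexivity. }
    unfold c, v. simpl. rewrite Cexp_sub. unfold Cdiv. ring.
  - intros [H1 H].
    set (v := fun k : nat => match k return C with O => 1 | S j => Cexp (xt (S j)) end).
    set (w := fun k : nat => match k return C with O => 0 | S j => 1 end).
    set (c := fun k : nat => match k return C with O => 1 | 1%nat => lam / Cexp (x 1%nat)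
                        | S j => 1 + lam * v j / Cexp (x (S j)) end).
    destruct (chain x p lam (S M) v w c) as [E1 E2].
    { intros k Hk. destruct k as [|j].
      - pose proof (Cexp_nz (x 1%nat)).
        unfold v, w, c, Lax; cbn [m11 m12 m21 m22].
        rewrite H1, Cexp_sub, Cexp_neg. split; field; auto.
      - specialize (H (S (S j)) ltac:(lia)).
        replace (S (S j) - 1)%nat with (S j) in H by lia.
        rewrite (Cexp_sub (x (S (S j)))) in H.
        apply (step x p xt lam (S (S j)) (Cexp (xt (S j)))); auto. apply Cexp_nz. }
    unfold v at 1, w at 1 in E1. rewrite Cmult_1_r, Cmult_0_r, Cplus_0_r in E1.
    rewrite E1. rewrite Cprod1_shift.
    rewrite (Cprod1_ext M (fun k => c (S k)) d).
    2:{ intros k Hk. destruct k as [|j]; [lia|]. unfold c, d, v.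
        rewrite Cexp_sub. replace (S j + 1)%nat with (S (S j)) by lia. unfold Cdiv; ring. }
    unfold c, v. rewrite Cexp_sub. pose proof (Cexp_nz (x 1%nat)). field. auto.
Qed.
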